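(* Let $n \in \mathbb{N}$ and let $K \subset \mathbb{C}$ be compact. The mapping $\mathcal{Q}_n: (H^2)^* \rightarrow C(K)$ which takes a function $f$ to $Q_n(1/f)$ is continuous (with the $H^2$ norm topology on $(H^2)^*$ and the uniform topology on $C(K)$).
   Context: $H^2$ is the Hardy space on the unit disc with norm $\|\sum_k a_kz^k\|_{H^2}^2=\sum_k|a_k|^2$, and $(H^2)^*=H^2\setminus\{0\}$. For $f\in (H^2)^*$, the optimal polynomial approximant $Q_n(1/f)$ is the unique polynomial of degree at most $n$ minimizing $\|qf-1\|_{H^2}$ over all polynomials $q$ of degree at most $n$. $C(K)$ is the space of continuous functions on $K$ with the sup norm. *)

(* Defs.v *)
From HB Require Import structures.
From mathcomp Require Import all_boot all_order all_algebra.
From mathcomp Require Import complex.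
From mathcomp Require Import all_classical all_reals all_analysis.
Set Implicit Arguments. Unset Strict Implicit. Unset Printing Implicit Defensive.
Import Order.TTheory GRing.Theory Num.Theory.
Import numFieldTopology.Exports numFieldNormedType.Exports.
Local Open Scope ring_scope.
Local Open Scope complex_scope.
Local Open Scope classical_set_scope.

Section H2.
Variable R : realType.

Definition cabs2 (z : R[i]) : R := (complex.Re z) ^+ 2 + (complex.Im z) ^+ 2.

(* An element of H^2 is given by its Taylor coefficient sequence a : nat -> R[i],
   f = sum_k a_k z^k, with sum_k |a_k|^2 < oo. *)
Definition H2 (a : nat -> R[i]) : Prop :=
  cvgn (series (fun k => cabs2 (a k))).

Definition h2norm (a : nat -> R[i]) : R :=
  Num.sqrt (limn (series (fun k => cabs2 (a k)))).

(* (H^2)^* = H^2 \ {0} *)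
Definition H2star (a : nat -> R[i]) : Prop := H2 a /\ exists k, a k != 0.

(* Taylor coefficients of q f - 1, for a polynomial q *)
Definition res_coef (q : {poly R[i]}) (a : nat -> R[i]) (k : nat) : R[i] :=
  \sum_(i < k.+1) q`_i * a (k - i)%N - (k == 0%N)%:R.

Definition is_opa (n : nat) (a : nat -> R[i]) (q : {poly R[i]}) : Prop :=
  (size q <= n.+1)%N /\
  forall p : {poly R[i]}, (size p <= n.+1)%N ->
    h2norm (res_coef q a) <= h2norm (res_coef p a).

Definition Qn (n : nat) (a : nat -> R[i]) : {poly R[i]} :=
  xget 0 [set q | is_opa n a q].

End H2.

(* Main.v *)
Require Import Defs.
From HB Require Import structures.
From mathcomp Require Import all_boot all_order all_algebra.
From mathcomp Require Import complex.
From mathcomp Require Import all_classical all_reals all_analysis.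
From mathcomp Require Import ring lra.
From mathcomp Require finmap.
Set Implicit Arguments. Unset Strict Implicit. Unset Printing Implicit Defensive.
Import Order.TTheory GRing.Theory Num.Theory.
Import numFieldTopology.Exports numFieldNormedType.Exports.
Local Open Scope ring_scope.
Local Open Scope classical_set_scope.
Local Open Scope complex_scope.


Section H2lemmas.
Variable R : realType.
Local Notation C := (R[i]).
Implicit Types (a b : nat -> C) (x y : C).

Lemma cabs2_ge0 x : 0 <= cabs2 x.
Proof. by rewrite /cabs2 addr_ge0 // sqr_ge0. Qed.

Lemma cabs2D x y : cabs2 (x + y) <= 2 * (cabs2 x + cabs2 y).
Proof.
case: x => a b; case: y => c d; rewrite /cabs2 /=.
have h1 : (a + c) ^+ 2 <= 2 * (a ^+ 2 + c ^+ 2).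
  have := sqr_ge0 (a - c); rewrite !sqrrD !sqrrN => H.
  by rewrite mulrDr !mulr2n !mulrDl !mul1r; lra.
have h2 : (b + d) ^+ 2 <= 2 * (b ^+ 2 + d ^+ 2).
  have := sqr_ge0 (b - d); rewrite !sqrrD !sqrrN => H.
  by rewrite mulrDr !mulr2n !mulrDl !mul1r; lra.
lra.
Qed.

Lemma cabs2M x y : cabs2 (x * y) = cabs2 x * cabs2 y.
Proof. by case: x => a b; case: y => c d; rewrite /cabs2 /=; ring. Qed.

Lemma cabs2N x : cabs2 (- x) = cabs2 x.
Proof. by case: x => a b; rewrite /cabs2 /= !sqrrN. Qed.

Lemma cabs2R (t : R) : cabs2 t%:C = t ^+ 2.
Proof. by rewrite /cabs2 /= expr0n /= addr0. Qed.

Lemma cabs2_eq0 x : (cabs2 x == 0) = (x == 0).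
Proof.
case: x => a b; rewrite /cabs2 /= paddr_eq0 ?sqr_ge0 // !sqrf_eq0.
by rewrite eq_complex.
Qed.

Definition cm x : R := Num.sqrt (cabs2 x).

Lemma normc_cm x : `|x| = (cm x)%:C.
Proof. by rewrite normc_def. Qed.

Lemma cm_ge0 x : 0 <= cm x. Proof. exact: sqrtr_ge0. Qed.

Lemma cmD x y : cm (x + y) <= cm x + cm y.
Proof. by rewrite -lecR rmorphD /= -!normc_cm ler_normD. Qed.

Lemma cmM x y : cm (x * y) = cm x * cm y.
Proof. by rewrite /cm cabs2M sqrtrM // cabs2_ge0. Qed.

Lemma cmN x : cm (- x) = cm x.
Proof. by rewrite /cm cabs2N. Qed.

Lemma cmX x k : cm (x ^+ k) = cm x ^+ k.
Proof. by elim: k => [|k IH]; rewrite ?expr0 ?exprS ?cmM ?IH // /cm /cabs2 /= expr0n /= expr1n addr0 sqrtr1. Qed.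

Lemma cm2 x : cm x ^+ 2 = cabs2 x.
Proof. by rewrite sqr_sqrtr // cabs2_ge0. Qed.

Lemma cm_sum I (r : seq I) (P : pred I) (F : I -> C) :
  cm (\sum_(i <- r | P i) F i) <= \sum_(i <- r | P i) cm (F i).
Proof.
elim/big_ind2: _ => //; first by rewrite /cm /cabs2 /= expr0n /= addr0 sqrtr0.
by move=> x1 x2 y1 y2 h1 h2; apply: le_trans (cmD _ _) _; apply: lerD.
Qed.

Lemma cm_le_re (u v : R) : `|u| <= cm (u +i* v).
Proof. rewrite /cm /cabs2 /= -sqrtr_sqr ler_wsqrtr // lerDl sqr_ge0 //. Qed.
Lemma cm_le_im (u v : R) : `|v| <= cm (u +i* v).
Proof. rewrite /cm /cabs2 /= -sqrtr_sqr ler_wsqrtr // lerDr sqr_ge0 //. Qed.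
Lemma cm_le_reim (u v : R) : cm (u +i* v) <= `|u| + `|v|.
Proof.
rewrite /cm /cabs2 /=.
have h : 0 <= `|u| + `|v| by rewrite addr_ge0.
Timeout 10 rewrite -(ger0_norm h) -sqrtr_sqr.
Timeout 10 apply: ler_wsqrtr.
have -> : (`|u| + `|v|) ^+ 2 = u ^+ 2 + v ^+ 2 + 2 * (`|u| * `|v|).
  by rewrite sqrrD !real_normK ?num_real //; rewrite mulr2n; ring.
by rewrite lerDl mulr_ge0.
Qed.

End H2lemmas.

Section Ser.
Variable R : realType.
Local Notation C := (R[i]).
Implicit Types (a b : nat -> C) (x y : C).

Definition Nn a : R := limn (series (fun k => cabs2 (a k))).

Lemma H2_D a b : H2 a -> H2 b -> H2 (fun k => a k + b k).
Proof.
move=> ha hb; apply: (@series_le_cvg _ _ (fun k => 2 * (cabs2 (a k) + cabs2 (b k)))).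
- by move=> k; apply: cabs2_ge0.
- by move=> k; rewrite mulr_ge0 // addr_ge0 // cabs2_ge0.
- by move=> k; apply: cabs2D.
- have -> : (fun k => 2 * (cabs2 (a k) + cabs2 (b k))) =
     2 *: ((fun k => cabs2 (a k)) + (fun k => cabs2 (b k))) by apply/funext => k.
  by apply: is_cvg_seriesZ; apply: is_cvg_seriesD.
Qed.

Lemma H2_Z c a : H2 a -> H2 (fun k => c * a k).
Proof.
move=> ha; rewrite /H2.
have -> : (fun k => cabs2 (c * a k)) = cabs2 c *: (fun k => cabs2 (a k)).
  by apply/funext => k; rewrite cabs2M.
exact: is_cvg_seriesZ.
Qed.

Lemma Nn_Z c a : H2 a -> Nn (fun k => c * a k) = cabs2 c * Nn a.
Proof.
move=> ha; rewrite /Nn.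
have -> : (fun k => cabs2 (c * a k)) = cabs2 c *: (fun k => cabs2 (a k)).
  by apply/funext => k; rewrite cabs2M.
by rewrite lim_seriesZ.
Qed.

Lemma H2_N a : H2 a -> H2 (fun k => - a k).
Proof.
by move=> ha; rewrite /H2; under eq_fun do rewrite cabs2N.
Qed.

Lemma Nn_N a : Nn (fun k => - a k) = Nn a.
Proof. by rewrite /Nn; under eq_fun do rewrite cabs2N. Qed.

Lemma H2_B a b : H2 a -> H2 b -> H2 (fun k => a k - b k).
Proof. by move=> ha hb; apply: H2_D => //; apply: H2_N. Qed.

Lemma Nn_cvg a : H2 a -> series (fun k => cabs2 (a k)) @ \oo --> Nn a.
Proof. by move=> ha; apply: ha. Qed.

Lemma series_le_Nn a N : H2 a -> series (fun k => cabs2 (a k)) N <= Nn a.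
Proof.
move=> ha; apply: nondecreasing_cvgn_le => //.
move=> p q pq; rewrite /series /=.
by apply: (@nondecreasing_series _ _ xpredT 0) => // m _ _; apply: cabs2_ge0.
Qed.

Lemma Nn_ge0 a : H2 a -> 0 <= Nn a.
Proof. by move=> ha; apply: le_trans (@series_le_Nn a 0 ha); rewrite /series /= big_geq. Qed.

Lemma coef_le_Nn a k : H2 a -> cabs2 (a k) <= Nn a.
Proof.
move=> ha; apply: le_trans (@series_le_Nn a k.+1 ha).
rewrite /series /= big_nat_recr //= lerDr.
by rewrite sumr_ge0 // => i _; apply: cabs2_ge0.
Qed.

Definition sh (i : nat) a k : C := if (i <= k)%N then a (k - i)%N else 0.

Lemma series_sh i a N :
  series (fun k => cabs2 (sh i a k)) (N + i)%N = series (fun k => cabs2 (a k)) N.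
Proof.
rewrite /series /= (@big_cat_nat _ _ _ i) ?leq_addl //= big1_seq; last first.
  move=> k /andP[_]; rewrite mem_index_iota => /andP[_ ki].
  by rewrite /sh leqNgt ki /cabs2 /= expr0n /= addr0.
rewrite add0r -{1}(add0n i) big_addn addnK.
by apply: eq_bigr => k _; rewrite /sh leq_addl addnK.
Qed.

Lemma sh_cvg i a : H2 a -> series (fun k => cabs2 (sh i a k)) @ \oo --> Nn a.
Proof.
move=> ha; rewrite -(cvg_shiftn i).
have -> : [sequence series (fun k => cabs2 (sh i a k)) (n + i)%N]_n =
  series (fun k => cabs2 (a k)) by apply/funext => N /=; rewrite series_sh.
exact: Nn_cvg.
Qed.

Lemma H2_sh i a : H2 a -> H2 (sh i a).
Proof. by move=> ha; apply/cvg_ex; exists (Nn a); apply: sh_cvg. Qed.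

Lemma Nn_sh i a : H2 a -> Nn (sh i a) = Nn a.
Proof. by move=> ha; apply: cvg_lim => //; apply: sh_cvg. Qed.

Definition dl k : C := (k == 0%N)%:R.

Lemma cabs2_0 : cabs2 (0 : C) = 0.
Proof. by rewrite -(rmorph0 (real_complex R)) cabs2R expr0n. Qed.

Lemma cabs2_1 : cabs2 (1 : C) = 1.
Proof. by rewrite -(rmorph1 (real_complex R)) cabs2R expr1n. Qed.

Lemma dl_cvg : series (fun k => cabs2 (dl k)) @ \oo --> (1 : R).
Proof.
rewrite -cvg_shiftS.
have -> : [sequence series (fun k => cabs2 (dl k)) n.+1]_n = fun=> 1.
  apply/funext => N /=; rewrite /series /= big_nat_recl //= big1 ?addr0.
    by rewrite /dl /= cabs2_1.
  by move=> k _; rewrite /dl /= cabs2_0.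
exact: cvg_cst.
Qed.

Lemma H2_dl : H2 dl.
Proof. by apply/cvg_ex; exists 1; apply: dl_cvg. Qed.

Lemma Nn_dl : Nn dl = 1.
Proof. by apply: cvg_lim => //; apply: dl_cvg. Qed.

End Ser.

Section Quad.
Variable R : realType.
Local Notation C := (R[i]).
Local Notation dl := (@dl R).
Implicit Types (a b : nat -> C) (x y : C).

Lemma cabs2_quad x y (t : R) :
  cabs2 (x + t%:C * y) = cabs2 x + t * (cabs2 (x + y) - cabs2 x - cabs2 y) + t ^+ 2 * cabs2 y.
Proof. by case: x => u v; case: y => w z; rewrite /cabs2 /=; ring. Qed.

Definition Pp a b : R := Nn (fun k => a k + b k) - Nn a - Nn b.

Lemma Nn_quad a b (t : R) : H2 a -> H2 b ->
  Nn (fun k => a k + t%:C * b k) = Nn a + t * Pp a b + t ^+ 2 * Nn b.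
Proof.
move=> ha hb; rewrite /Nn /Pp.
have hab := H2_D ha hb.
have -> : (fun k => cabs2 (a k + t%:C * b k)) =
  (fun k => cabs2 (a k)) + (t *: ((fun k => cabs2 (a k + b k)) - (fun k => cabs2 (a k))
     - (fun k => cabs2 (b k))) + t ^+ 2 *: (fun k => cabs2 (b k))).
  by apply/funext => k; rewrite cabs2_quad -addrA.
have c1 : cvgn (series (fun k => cabs2 (a k))) := ha.
have c2 : cvgn (series (fun k => cabs2 (b k))) := hb.
have c3 : cvgn (series (fun k => cabs2 (a k + b k))) := hab.
have c4 := is_cvg_seriesB (is_cvg_seriesB c3 c1) c2.
set u1 := (fun k => cabs2 (a k)) in c1 c4 *.
set u2 := (fun k => cabs2 (b k)) in c2 c4 *.
set u3 := (fun k => cabs2 (a k + b k)) in c3 c4 *.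
have c5 : cvgn (series (t *: (u3 - u1 - u2))) := is_cvg_seriesZ (k:=t) c4.
have c6 : cvgn (series (t ^+ 2 *: u2)) := is_cvg_seriesZ (k:=t ^+ 2) c2.
rewrite (lim_seriesD c1 (is_cvg_seriesD c5 c6)) (lim_seriesD c5 c6).
rewrite (lim_seriesZ t c4) (lim_seriesZ (t ^+ 2) c2) (lim_seriesB (is_cvg_seriesB c3 c1) c2).
rewrite (lim_seriesB c3 c1).
by rewrite addrA.
Qed.

Lemma quad_disc (A B Cc : R) : (forall t, 0 <= A + t * B + t ^+ 2 * Cc) ->
  0 <= Cc -> B ^+ 2 <= 4 * A * Cc.
Proof.
move=> H hC; have hA : 0 <= A by have := H 0; rewrite mul0r expr0n /= mul0r !addr0.
have [C0|Cpos] := eqVneq Cc 0.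
  rewrite C0 mulr0; have [->|B0] := eqVneq B 0; first by rewrite expr0n.
  have := H (- (A + 1) / B); rewrite C0 mulr0 addr0 mulrAC -mulrA divff // mulr1.
  lra.
have Cp : 0 < Cc by rewrite lt_def Cpos hC.
have := H (- B / (2 * Cc)).
have -> : A + - B / (2 * Cc) * B + (- B / (2 * Cc)) ^+ 2 * Cc = A - B ^+ 2 / (4 * Cc).
  by field.
rewrite subr_ge0 ler_pdivrMr ?mulr_gt0 // => h.
by move: h; rewrite mulrCA mulrA.
Qed.

Lemma Pp_le a b : H2 a -> H2 b -> Pp a b <= 2 * (Num.sqrt (Nn a) * Num.sqrt (Nn b)).
Proof.
move=> ha hb.
have h := @quad_disc (Nn a) (Pp a b) (Nn b).
have : Pp a b ^+ 2 <= 4 * Nn a * Nn b.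
  apply: h; last exact: Nn_ge0.
  by move=> t; rewrite -Nn_quad //; apply: Nn_ge0; apply: H2_D => //; apply: H2_Z.
move=> h2; apply: le_trans (ler_norm _) _.
rewrite -sqrtr_sqr.
have -> : 2 * (Num.sqrt (Nn a) * Num.sqrt (Nn b)) = Num.sqrt (4 * Nn a * Nn b).
  rewrite -(@ger0_norm _ (2 * (Num.sqrt (Nn a) * Num.sqrt (Nn b)))); last first.
    by rewrite mulr_ge0 // mulr_ge0 // sqrtr_ge0.
  rewrite -sqrtr_sqr; congr Num.sqrt; rewrite !exprMn !sqr_sqrtr ?Nn_ge0 //; ring.
exact: ler_wsqrtr.
Qed.

Definition hn a : R := Num.sqrt (Nn a).

Lemma hn_ge0 a : 0 <= hn a. Proof. exact: sqrtr_ge0. Qed.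

Lemma hn2 a : H2 a -> hn a ^+ 2 = Nn a.
Proof. by move=> ha; rewrite sqr_sqrtr // Nn_ge0. Qed.

Lemma hn_D a b : H2 a -> H2 b -> hn (fun k => a k + b k) <= hn a + hn b.
Proof.
move=> ha hb; rewrite /hn -(ger0_norm (addr_ge0 (sqrtr_ge0 (Nn a)) (sqrtr_ge0 (Nn b)))).
rewrite -sqrtr_sqr; apply: ler_wsqrtr.
have -> : Nn (fun k => a k + b k) = Nn a + Pp a b + Nn b by rewrite /Pp; ring.
rewrite sqrrD !sqr_sqrtr ?Nn_ge0 //.
have := Pp_le ha hb; rewrite mulr2n; lra.
Qed.

Lemma hn_Z c a : H2 a -> hn (fun k => c * a k) = cm c * hn a.
Proof. by move=> ha; rewrite /hn Nn_Z // sqrtrM // cabs2_ge0. Qed.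

Lemma hn_N a : hn (fun k => - a k) = hn a.
Proof. by rewrite /hn Nn_N. Qed.

Lemma hn_sh i a : H2 a -> hn (sh i a) = hn a.
Proof. by move=> ha; rewrite /hn Nn_sh. Qed.

Lemma hn_dl : hn dl = 1.
Proof. by rewrite /hn Nn_dl sqrtr1. Qed.

Lemma hn_eq a b : a =1 b -> hn a = hn b.
Proof. by move=> e; rewrite /hn; congr (Num.sqrt (Nn _)); apply/funext. Qed.

Lemma H2_eq a b : a =1 b -> H2 a -> H2 b.
Proof. by move=> e; have -> : a = b by apply/funext. Qed.

Lemma hn_B a b : H2 a -> H2 b -> hn (fun k => a k - b k) <= hn a + hn b.
Proof. by move=> ha hb; apply: le_trans (hn_D ha (H2_N hb)) _; rewrite hn_N. Qed.

Lemma hn_Bsym a b : hn (fun k => a k - b k) = hn (fun k => b k - a k).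
Proof. by rewrite -hn_N; apply: hn_eq => k; rewrite opprB. Qed.

Lemma hn_dist a b : H2 a -> H2 b -> `|hn a - hn b| <= hn (fun k => a k - b k).
Proof.
move=> ha hb; have hab := H2_B ha hb; have hba := H2_B hb ha.
have h1 : hn a <= hn (fun k => a k - b k) + hn b.
  rewrite (@hn_eq a (fun k => (a k - b k) + b k)); first exact: hn_D.
  by move=> k; rewrite subrK.
have h2 : hn b <= hn (fun k => b k - a k) + hn a.
  rewrite (@hn_eq b (fun k => (b k - a k) + a k)); first exact: hn_D.
  by move=> k; rewrite subrK.
rewrite -hn_Bsym in h2.
rewrite ler_norml; apply/andP; split; lra.
Qed.

Lemma hn_eq0 a k : H2 a -> hn a = 0 -> a k = 0.
Proof.
move=> ha h0; apply/eqP; rewrite -cabs2_eq0 eq_le cabs2_ge0 andbT.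
have <- : Nn a = 0 by rewrite -(hn2 ha) h0 expr0n.
exact: coef_le_Nn.
Qed.

Lemma cm0 : cm (0 : C) = 0.
Proof. have h : (cm (0:C))%:C = 0 by rewrite -normc_cm normr0. by case: h. Qed.

Lemma H2_sum (N : nat) (F : nat -> nat -> C) : (forall i, H2 (F i)) ->
  H2 (fun k => \sum_(i < N) F i k) /\
  hn (fun k => \sum_(i < N) F i k) <= \sum_(i < N) hn (F i).
Proof.
move=> hF; elim: N => [|N [IH1 IH2]].
  have e : (fun k => \sum_(i < 0) F i k) =1 (fun k => 0 * dl k).
    by move=> k; rewrite big_ord0 mul0r.
  split; first by apply: (H2_eq (fun k => esym (e k))); apply: H2_Z; apply: H2_dl.
  rewrite big_ord0 (hn_eq e) hn_Z; last exact: H2_dl.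
  by rewrite (_ : cm _ = 0) ?mul0r //; apply: cm0.
have e : (fun k => \sum_(i < N.+1) F i k) =1 (fun k => \sum_(i < N) F i k + F N k).
  by move=> k; rewrite big_ord_recr.
split; first by apply: (H2_eq (fun k => esym (e k))); apply: H2_D.
rewrite (hn_eq e) big_ord_recr /=; apply: le_trans (hn_D IH1 (hF N)) _.
by rewrite lerD2r.
Qed.

End Quad.

Section Conv.
Variable R : realType.
Local Notation C := (R[i]).
Local Notation dl := (@dl R).
Implicit Types (a b : nat -> C) (x y : C) (p q : {poly C}).

Definition cnv p a k : C := \sum_(i < k.+1) p`_i * a (k - i)%N.

Lemma res_convE p a : res_coef p a = fun k => cnv p a k - dl k.
Proof. by []. Qed.

Lemma conv_shE N p a k : (size p <= N)%N ->
  cnv p a k = \sum_(i < N) p`_i * sh i a k.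
Proof.
move=> sp; rewrite /cnv.
rewrite (big_ord_widen (k.+1 + N) (fun i => p`_i * a (k - i)%N)) ?leq_addr //.
rewrite (big_ord_widen (k.+1 + N) (fun i => p`_i * sh i a k)) ?leq_addl //.
rewrite big_mkcond [RHS]big_mkcond; apply: eq_bigr => i _.
have [iN|iN] := ltnP i N.
  by rewrite /sh ltnS; case: (i <= k)%N; rewrite ?mulr0.
by rewrite nth_default ?(leq_trans sp) // !mul0r; case: ifP.
Qed.

Definition pn N p : R := \sum_(i < N) cm p`_i.

Lemma pn_ge0 N p : 0 <= pn N p.
Proof. by rewrite /pn sumr_ge0 // => i _; apply: cm_ge0. Qed.

Lemma H2_conv_le N p a : (size p <= N)%N -> H2 a ->
  H2 (cnv p a) /\ hn (cnv p a) <= pn N p * hn a.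
Proof.
move=> sp ha.
have e : cnv p a =1 (fun k => \sum_(i < N) (fun i k => p`_i * sh i a k) i k).
  by move=> k; rewrite (conv_shE _ _ sp).
have [h1 h2] := @H2_sum _ N (fun i k => p`_i * sh i a k)
   (fun i => H2_Z (c:=p`_i) (H2_sh (i:=i) ha)).
split; first exact: (H2_eq (fun k => esym (e k))).
rewrite (hn_eq e); apply: le_trans h2 _.
rewrite /pn mulr_suml; apply: ler_sum => i _.
rewrite hn_Z; last exact: H2_sh.
by rewrite -(hn_sh i ha).
Qed.

Lemma H2_conv N p a : (size p <= N)%N -> H2 a -> H2 (cnv p a).
Proof. by move=> sp ha; case: (H2_conv_le sp ha). Qed.

Lemma hn_conv N p a : (size p <= N)%N -> H2 a -> hn (cnv p a) <= pn N p * hn a.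
Proof. by move=> sp ha; case: (H2_conv_le sp ha). Qed.

Lemma H2_res N p a : (size p <= N)%N -> H2 a -> H2 (res_coef p a).
Proof.
move=> sp ha; rewrite res_convE; apply: H2_B; first exact: (H2_conv sp).
exact: H2_dl.
Qed.

Lemma conv_add p q a k : cnv (p + q) a k = cnv p a k + cnv q a k.
Proof. by rewrite /cnv -big_split; apply: eq_bigr => i _; rewrite coefD mulrDl. Qed.

Lemma conv_sub p q a k : cnv (p - q) a k = cnv p a k - cnv q a k.
Proof.
rewrite /cnv -sumrB; apply: eq_bigr => i _; by rewrite coefB mulrBl.
Qed.

Lemma conv_scale c p a k : cnv (c *: p) a k = c * cnv p a k.
Proof. by rewrite /cnv mulr_sumr; apply: eq_bigr => i _; rewrite coefZ mulrA. Qed.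

Lemma conv_subr p a b k : cnv p (fun k => a k - b k) k = cnv p a k - cnv p b k.
Proof. by rewrite /cnv -sumrB; apply: eq_bigr => i _; rewrite mulrBr. Qed.

Lemma conv0 a k : cnv 0 a k = 0.
Proof. by rewrite /cnv big1 // => i _; rewrite coef0 mul0r. Qed.

Lemma hn_res_conv N p a : (size p <= N)%N -> H2 a ->
  hn (cnv p a) <= hn (res_coef p a) + 1.
Proof.
move=> sp ha.
have e : cnv p a =1 (fun k => res_coef p a k + dl k) by move=> k; rewrite /= subrK.
rewrite (hn_eq e) -hn_dl; apply: hn_D; [exact: (H2_res sp)|exact: H2_dl].
Qed.

Lemma hn_res0 a : hn (res_coef 0 a) = 1.
Proof.
rewrite -hn_dl -hn_N; apply: hn_eq => k.
by rewrite /res_coef big1 ?sub0r ?opprK // => i _; rewrite coef0 mul0r.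
Qed.

End Conv.

Section Pyth.
Variable R : realType.
Local Notation C := (R[i]).
Local Notation dl := (@dl R).
Implicit Types (a b f g : nat -> C) (x y : C) (p q r : {poly C}).

Lemma Nn_eq a b : a =1 b -> Nn a = Nn b.
Proof. by move=> e; congr Nn; apply/funext. Qed.

Lemma lin_quad (B Cc : R) : (forall t, 0 <= t * B + t ^+ 2 * Cc) -> 0 <= Cc -> B = 0.
Proof.
move=> H hC.
have H' : forall t, 0 <= 0 + t * B + t ^+ 2 * Cc by move=> t; rewrite add0r; exact: H.
have := @quad_disc _ 0 B Cc H' hC; rewrite mulr0 mul0r => h2.
by apply/eqP; rewrite -sqrf_eq0 eq_le h2 sqr_ge0.
Qed.

Lemma opa_le n a q p : is_opa n a q -> (size p <= n.+1)%N ->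
  hn (res_coef q a) <= hn (res_coef p a).
Proof. by case=> _ H; exact: H. Qed.

Lemma size_subp N p q : (size p <= N)%N -> (size q <= N)%N -> (size (p - q)%R <= N)%N.
Proof.
by move=> hp hq; apply: leq_trans (size_add _ _) _; rewrite size_opp geq_max hp hq.
Qed.

Lemma size_addp N p q : (size p <= N)%N -> (size q <= N)%N -> (size (p + q)%R <= N)%N.
Proof. by move=> hp hq; apply: leq_trans (size_add _ _) _; rewrite geq_max hp hq. Qed.

Lemma size_scalep N c p : (size p <= N)%N -> (size (c *: p) <= N)%N.
Proof. by move=> hp; apply: leq_trans (size_scale_leq _ _) hp. Qed.

Lemma pyth n f q r : H2 f -> is_opa n f q -> (size r <= n.+1)%N ->
  Nn (res_coef r f) = Nn (res_coef q f) + Nn (cnv (r - q) f).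
Proof.
move=> hf hq hr; have sq : (size q <= n.+1)%N by case: hq.
have srq := size_subp hr sq.
have he : H2 (res_coef q f) := H2_res sq hf.
have hD : H2 (cnv (r - q) f) := H2_conv srq hf.
have E t : res_coef (q + t%:C *: (r - q)) f =1
    (fun k => res_coef q f k + t%:C * cnv (r - q) f k).
  by move=> k; rewrite !res_convE conv_add conv_scale addrAC.
have P0 : Pp (res_coef q f) (cnv (r - q) f) = 0.
  suff Hq : forall t, 0 <= t * Pp (res_coef q f) (cnv (r - q) f) + t ^+ 2 * Nn (cnv (r - q) f).
    exact: lin_quad Hq (Nn_ge0 hD).
  move=> t; have := opa_le hq (size_addp sq (size_scalep (t%:C) srq)).
  rewrite /hn ler_sqrt ?Nn_ge0 //; last exact: H2_res (size_addp sq (size_scalep (t%:C) srq)) hf.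
  rewrite (Nn_eq (E t)) Nn_quad //; lra.
have E1 : res_coef r f =1 (fun k => res_coef q f k + 1%:C * cnv (r - q) f k).
  move=> k; rewrite -(E 1) rmorph1 scale1r; congr res_coef.
  by rewrite addrC subrK.
by rewrite (Nn_eq E1) Nn_quad // P0 mulr0 addr0 expr1n mul1r.
Qed.

End Pyth.

Section Vec.
Variables (R : realType) (n : nat).
Local Notation C := (R[i]).
Local Notation dl := (@dl R).
Local Notation N1 := n.+1.
Local Notation V := 'rV[R]_(N1 + N1).
Implicit Types (a b f g : nat -> C) (p q r : {poly C}) (v w : V).

Definition cv v (i : nat) : C :=
  (v ord0 (lshift N1 (inord i : 'I_N1))) +i* (v ord0 (rshift N1 (inord i : 'I_N1))).
Definition vp v : {poly C} := \poly_(i < N1) cv v i.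
Definition pv p : V :=
  \row_(j < N1 + N1) (match fintype.split j with inl i => complex.Re p`_i | inr i => complex.Im p`_i end).

Lemma vp_pv p : (size p <= N1)%N -> vp (pv p) = p.
Proof.
move=> sp; apply/polyP => i; rewrite coef_poly.
case: ltnP => hi.
  rewrite /cv !mxE.
  have -> : fintype.split (lshift N1 (inord i : 'I_N1)) = inl (inord i) := unsplitK (inl _).
  have -> : fintype.split (rshift N1 (inord i : 'I_N1)) = inr (inord i) := unsplitK (inr _).
  by rewrite inordK //; case: (p`_i).
by rewrite nth_default // (leq_trans sp hi).
Qed.

Lemma size_vp v : (size (vp v) <= N1)%N.
Proof. exact: size_poly. Qed.

Lemma cv_sub v w i : cv (v - w) i = cv v i - cv w i.
Proof. by rewrite /cv !mxE. Qed.

Lemma cv_scale (t : R) v i : cv (t *: v) i = t%:C * cv v i.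
Proof. by rewrite /cv !mxE /=; congr (_ +i* _); ring. Qed.

Lemma vp_sub v w : vp (v - w) = vp v - vp w.
Proof.
by apply/polyP => i; rewrite coefB !coef_poly; case: ifP => _; rewrite ?cv_sub ?subr0.
Qed.

Lemma vp_scale (t : R) v : vp (t *: v) = t%:C *: vp v.
Proof.
by apply/polyP => i; rewrite coefZ !coef_poly; case: ifP => _; rewrite ?cv_scale ?mulr0.
Qed.

Lemma vp0 : vp 0 = 0.
Proof.
apply/polyP => i; rewrite coef0 coef_poly; case: ifP => _ //.
by rewrite /cv !mxE.
Qed.

Lemma entry_le v j : `|v ord0 j| <= `|v|.
Proof.
rewrite [leRHS]/Num.norm /= mx_normrE; apply/bigmax_geP; right => /=.
by exists (ord0, j).
Qed.

Lemma pn_vp_le v : pn N1 (vp v) <= (2 * `|v|) *+ N1.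
Proof.
have -> : (2 * `|v|) *+ N1 = \sum_(i < N1) (2 * `|v|) by rewrite sumr_const card_ord.
rewrite /pn; apply: ler_sum => i _; rewrite coef_poly ltn_ord.
apply: le_trans (cm_le_reim _ _) _.
by rewrite mulr2n mulrDl mul1r lerD // entry_le.
Qed.

Lemma norm_le_pn v : `|v| <= pn N1 (vp v).
Proof.
rewrite [leLHS]/Num.norm /= mx_normrE; apply/bigmax_leP; split; first exact: pn_ge0.
move=> [i0 j] _ /=; rewrite -(splitK j).
have Hk : forall k : 'I_N1, cm (cv v k) <= pn N1 (vp v).
  move=> k; rewrite /pn (bigD1 k) //= coef_poly ltn_ord lerDl.
  by apply: sumr_ge0 => i _; apply: cm_ge0.
rewrite (ord1 i0).
case: (fintype.split j) => k /=.
  apply: le_trans (Hk k); rewrite /cv inord_val; exact: cm_le_re.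
apply: le_trans (Hk k); rewrite /cv inord_val; exact: cm_le_im.
Qed.

Lemma lip_cont (F : V -> R) (L : R) : 0 <= L ->
  (forall v w, `|F v - F w| <= L * `|v - w|) -> continuous F.
Proof.
move=> L0 H x; apply/(@cvgrPdist_lt _ _ _ (nbhs x) (nbhs_filter x)) => e e0.
apply/nbhs_ballP; exists (e / (L + 1)); first by rewrite /= divr_gt0 //; lra.
move=> y; rewrite -ball_normE /= => hxy.
apply: le_lt_trans (H x y) _.
apply: le_lt_trans (ler_wpM2l L0 (ltW hxy)) _.
by rewrite mulrA ltr_pdivrMr; nra.
Qed.

Lemma bounded_of (A : set V) (r : R) : (forall v, A v -> `|v| <= r) -> bounded_set A.
Proof.
move=> H; rewrite /bounded_near /=; near=> M => v /H /le_trans; apply.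
by near: M; apply: nbhs_pinfty_ge; exact: num_real.
Unshelve. all: by end_near.
Qed.

End Vec.

Section Coer.
Variables (R : realType) (n : nat).
Local Notation C := (R[i]).
Local Notation dl := (@dl R).
Local Notation N1 := n.+1.
Local Notation V := 'rV[R]_(N1 + N1).
Implicit Types (a b f g : nat -> C) (p q r : {poly C}) (v w : V).

Lemma mulrn_eq (x : R) k : (2 * x) *+ k = (2 * k%:R) * x.
Proof. by rewrite -mulr_natr mulrAC. Qed.

Lemma cmR (t : R) : cm t%:C = `|t|.
Proof. by rewrite /cm cabs2R sqrtr_sqr. Qed.

Lemma hn_pos a : H2 a -> (exists k, a k != 0) -> 0 < hn a.
Proof.
move=> ha [k hk]; rewrite lt_def hn_ge0 andbT; apply/eqP => h0.
by move: hk; rewrite (hn_eq0 k ha h0) eqxx.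
Qed.

Lemma cnv_nz p g : p != 0 -> (exists k, g k != 0) -> exists k, cnv p g k != 0.
Proof.
move=> pnz hg.
have hp : exists i, p`_i != 0.
  by exists (size p).-1; rewrite -lead_coefE lead_coef_eq0.
case: (ex_minnP hp) => i0 pi0 mini0.
case: (ex_minnP hg) => j0 gj0 minj0.
exists (i0 + j0)%N; rewrite /cnv.
have hi0 : (i0 < (i0 + j0).+1)%N by rewrite ltnS leq_addr.
rewrite (bigD1 (Ordinal hi0)) //= big1 ?addr0.
  by rewrite addKn mulf_neq0.
move=> i /eqP hne.
have hne' : (val i != i0) by apply/eqP => h; apply: hne; apply: val_inj.
have [lt|gt] := ltnP i i0.
  have -> : p`_i = 0.
    by apply/eqP; apply: contraTT lt => /mini0; rewrite -leqNgt.
  by rewrite mul0r.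
have gt' : (i0 < i)%N by rewrite ltn_neqAle eq_sym hne' gt.
have -> : g (i0 + j0 - i)%N = 0.
  apply/eqP; apply: contraTT gt' => /minj0 h; rewrite -leqNgt.
  by move: h; rewrite leq_subRL ?leq_add2r // -ltnS; apply: ltn_ord.
by rewrite mulr0.
Qed.

Definition Fc g v : R := hn (cnv (vp v) g).
Definition Gc g v : R := hn (res_coef (vp v) g).

Lemma Fc_lip g : H2 g -> forall v w,
  `|Fc g v - Fc g w| <= (2 * N1%:R * hn g) * `|v - w|.
Proof.
move=> hg v w.
apply: le_trans (hn_dist (H2_conv (size_vp v) hg) (H2_conv (size_vp w) hg)) _.
rewrite (@hn_eq _ _ (cnv (vp (v - w)) g)); last by move=> k; rewrite vp_sub conv_sub.
apply: le_trans (hn_conv (size_vp _) hg) _.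
rewrite mulrAC ler_wpM2r ?hn_ge0 //.
by apply: le_trans (pn_vp_le _) _; rewrite mulrn_eq.
Qed.

Lemma Gc_lip g : H2 g -> forall v w,
  `|Gc g v - Gc g w| <= (2 * N1%:R * hn g) * `|v - w|.
Proof.
move=> hg v w.
apply: le_trans (hn_dist (H2_res (size_vp v) hg) (H2_res (size_vp w) hg)) _.
rewrite (@hn_eq _ _ (cnv (vp (v - w)) g)); last first.
  by move=> k; rewrite !res_convE vp_sub conv_sub; rewrite opprB addrA subrK.
apply: le_trans (hn_conv (size_vp _) hg) _.
rewrite mulrAC ler_wpM2r ?hn_ge0 //.
by apply: le_trans (pn_vp_le _) _; rewrite mulrn_eq.
Qed.

Lemma Lpos g : 0 <= 2 * N1%:R * hn g.
Proof. by rewrite mulr_ge0 ?hn_ge0 // mulr_ge0. Qed.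

End Coer.

Section Exist.
Variables (R : realType) (n : nat).
Local Notation C := (R[i]).
Local Notation dl := (@dl R).
Local Notation N1 := n.+1.
Local Notation V := 'rV[R]_(N1 + N1).
Implicit Types (a b f g : nat -> C) (p q r : {poly C}) (v w : V).

Lemma coercive g : H2star g ->
  exists2 m, 0 < m & forall p, (size p <= N1)%N -> m * pn N1 p <= hn (cnv p g).
Proof.
case=> hg hgnz.
pose S := [set v : V | `|v| = 1].
have S0 : S !=set0.
  pose w : V := const_mx 1.
  have wnz : w != 0.
    apply/eqP => /matrixP /(_ ord0 (lshift N1 ord0)); rewrite !mxE.
    by apply/eqP; exact: oner_neq0.
  exists (`|w|^-1 *: w); rewrite /S /= normrZ ger0_norm ?invr_ge0 //.
  by rewrite mulVf // normr_eq0.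
have Sc : compact S.
  apply: bounded_closed_compact.
    by apply: (@bounded_of _ _ _ 1) => v ->.
  have -> : S = Num.norm @^-1` [set x | x = 1] by [].
  apply: preimage_closed; last exact: closed_eq.
  by move=> x _; exact: norm_continuous.
have Fcont : continuous (@Fc R n g) := lip_cont (Lpos n g) (Fc_lip hg).
have [c cS cmin] := compact_EVT_min S0 Sc (continuous_subspaceT Fcont).
have cS' : `|c| = 1 := set_mem cS.
set m0 := @Fc R n g c.
have m0pos : 0 < m0.
  have cnz : vp c != 0.
    apply/eqP => hc; have := norm_le_pn c; rewrite hc cS' /pn big1 => [|i _].
      by rewrite ler10.
    by rewrite coef0 cm0.
  have [k hk] := cnv_nz cnz hgnz.
  by apply: hn_pos => //; [exact: H2_conv (size_vp c) hg | exists k].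
have N1pos : 0 < 2 * N1%:R :> R by rewrite mulr_gt0 // ltr0n.
exists (m0 / (2 * N1%:R)); first by rewrite divr_gt0.
move=> p sp; set v := pv n p.
have vpv : vp v = p := vp_pv sp.
have hpn : pn N1 p <= 2 * N1%:R * `|v| by rewrite -vpv -mulrn_eq pn_vp_le.
have [v0|vnz] := eqVneq `|v| 0.
  have -> : pn N1 p = 0.
    by apply/eqP; rewrite eq_le pn_ge0 andbT; rewrite v0 mulr0 in hpn.
  by rewrite mulr0 hn_ge0.
have spos : 0 < `|v| by rewrite lt_def vnz normr_ge0.
set s := `|v| in hpn spos vnz.
have c'S : (s^-1 *: v) \in S.
  by apply: mem_set; rewrite /S /= normrZ ger0_norm ?invr_ge0 ?ltW // mulVf.
have H1 := cmin _ c'S.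
have E : @Fc R n g (s^-1 *: v) = s^-1 * hn (cnv p g).
  rewrite /Fc vp_scale vpv.
  rewrite (@hn_eq _ _ (fun k => s^-1%:C * cnv p g k)); last by move=> k; rewrite conv_scale.
  rewrite hn_Z; last exact: H2_conv sp hg.
  congr (_ * _); apply: etrans (cmR _) _; by rewrite ger0_norm // invr_ge0 ltW.
rewrite E in H1.
have H2' : m0 * s <= hn (cnv p g).
  have := ler_wpM2r (ltW spos) H1; rewrite mulrAC mulVf ?mul1r //.
apply: le_trans H2'.
apply: le_trans (ler_wpM2l _ hpn) _.
  by rewrite divr_ge0 // ?ltW.
by rewrite mulrA divfK // gt_eqF.
Qed.

Lemma opa_exists g : H2star g -> exists q, is_opa n g q.
Proof.
move=> hgs; have hg := hgs.1.
have [m mpos mH] := coercive hgs.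
pose r := 3 / m.
have rpos : 0 < r by rewrite divr_gt0.
pose A := closed_ball_ Num.norm (0 : V) r.
have A0 : A !=set0 by exists 0; rewrite /A /closed_ball_ /= subr0 normr0 ltW.
have Ac : compact A.
  apply: bounded_closed_compact; last exact: closed_closed_ball_.
  by apply: (@bounded_of _ _ _ r) => v; rewrite /A /closed_ball_ /= sub0r normrN.
have Gcont : continuous (@Gc R n g) := lip_cont (Lpos n g) (Gc_lip hg).
have [c cA cmin] := compact_EVT_min A0 Ac (continuous_subspaceT Gcont).
exists (vp c); split; first exact: size_vp.
move=> p sp; set v := pv n p.
have vpv : vp v = p := vp_pv sp.
change (@Gc R n g c <= hn (res_coef p g)); rewrite -vpv.
have [Av|Av] := pselect (A v); first exact: cmin (mem_set Av).
have G0 : @Gc R n g c <= 1.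
  have := cmin 0 (mem_set _); rewrite /Gc vp0 hn_res0; apply.
  by rewrite /A /closed_ball_ /= subr0 normr0 ltW.
apply: le_trans G0 _.
have rv : r < `|v|.
  by rewrite ltNge; apply/negP => h; apply: Av; rewrite /A /closed_ball_ /= sub0r normrN.
have h1 := hn_res_conv (size_vp v) hg.
have h2 := mH _ (size_vp v).
have h3 := norm_le_pn v.
have h4 : m * `|v| <= m * pn N1 (vp v) by rewrite ler_wpM2l // ltW.
have h5 : m * r = 3 by rewrite /r mulrC divfK // gt_eqF.
have h6 : m * r <= m * `|v| by rewrite ler_wpM2l // ltW.
rewrite /Gc; lra.
Qed.

Lemma Qn_opa g : H2star g -> is_opa n g (Qn n g).
Proof. by move=> hg; apply: (xgetPex 0 (opa_exists hg)). Qed.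

End Exist.

Section KB.
Variable R : realType.
Local Notation C := (R[i]).

Lemma cmB_sym (x y : C) : cm (x - y) = cm (y - x).
Proof. by rewrite -cmN opprB. Qed.

Lemma Kbound (K : set C^o) : compact K ->
  exists M : R, 1 <= M /\ forall z, K z -> cm z <= M.
Proof.
rewrite compact_cover => Kc.
pose U (k : nat) : set C^o := [set z | cm z < k%:R].
have Uo : forall k, [set: nat] k -> open (U k).
  move=> k _; rewrite openE => z; rewrite /U /= => hz.
  apply/nbhs_ballP; exists ((k%:R - cm z)%:C).
    by rewrite /= ltcR subr_gt0.
  move=> y; rewrite -ball_normE /= normc_cm ltcR => hy.
  rewrite /U /=; have := cmD z (y - z); rewrite addrC subrK => h.
  by apply: le_lt_trans h _; rewrite cmB_sym -ltrBrDl.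
have cov : K `<=` cover [set: nat] U.
  by move=> z _; exists (Num.Def.trunc (cm z)).+1 => //; rewrite /U /= truncnS_gt.
have [D _ DK] := Kc _ _ _ Uo cov.
exists ((\max_(i <- finmap.enum_fset D) i)%:R + 1); split.
  by rewrite lerDr.
move=> z /DK [k kD /= hk].
apply: le_trans (ltW hk) _.
apply: (@le_trans _ _ (\max_(i <- finmap.enum_fset D) i)%:R); last by rewrite lerDl.
by rewrite ler_nat; apply: (@leq_bigmax_seq _ _ xpredT (fun i => i)).
Qed.

End KB.

Lemma ar1 (R : realType) (mf pn d hp hg : R) : 0 < mf -> 0 <= pn -> mf * pn <= hp ->
  hp <= hg + pn * d -> hg <= 2 -> d < mf / 2 -> pn <= 4 / mf.
Proof.
move=> mfp h0 h1 h2 h3 h4.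
have h5 : pn * (mf / 2) <= pn * (mf - d) by rewrite ler_wpM2l // ; lra.
rewrite ler_pdivlMr //.
have e1 : pn * (mf - d) = mf * pn - pn * d by ring.
have e2 : pn * (mf / 2) = (pn * mf) / 2 by ring.
rewrite e1 e2 in h5.
set x := pn * mf in h5 *; set y := mf * pn in h1 e1; have : x = y by rewrite /x /y mulrC.
move=> xy; set z := pn * d in h2 h5; lra.
Qed.

Lemma ar2 (R : realType) (mf pn hp : R) : 0 < mf -> 0 <= pn -> mf * pn <= hp ->
  hp <= 2 -> pn <= 4 / mf.
Proof.
move=> mfp h0 h1 h2; rewrite ler_pdivlMr // mulrC; lra.
Qed.

Lemma ar3 (R : realType) (Apf Aqf Apg Aqg D Z U : R) : Apf = Aqf + D -> Aqg = Apg + Z -> 0 <= Z ->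
  `|Apf - Apg| <= U -> `|Aqf - Aqg| <= U -> D <= 2 * U.
Proof. by move=> e1 e2 hz; rewrite !ler_norml => /andP[a1 a2] /andP[b1 b2]; lra. Qed.

Lemma ar4 (R : realType) (mf pn B eps : R) : 0 < mf -> 0 < B ->
  mf * pn < eps * mf / B -> pn * B < eps.
Proof.
move=> hm hB; rewrite ltr_pdivlMr // => h; rewrite -(ltr_pM2l hm).
by move: h; rewrite mulrA [eps * mf]mulrC.
Qed.

Unset Implicit Arguments.

Theorem proposition2p1 (R : realType) (n : nat) (K : set (R[i])^o) (hK : compact K) :
  forall f : nat -> R[i], H2star f ->
  forall eps : R, 0 < eps ->
  exists delta : R, 0 < delta /\
    forall g : nat -> R[i], H2star g ->
      h2norm (fun k => g k - f k) < delta ->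
      forall z : R[i], K z ->
        `|(Qn n g).[z] - (Qn n f).[z]| < eps%:C.
Proof.
move=> f hfs eps epos.
have hf := hfs.1.
have [mf mfpos mfH] := coercive n hfs.
have [M [M1 hM]] := Kbound hK.
set q := Qn n f.
have hq : is_opa n f q := Qn_opa n hfs.
have sq : (size q <= n.+1)%N by case: hq.
set hF := hn f.
have hF0 : 0 <= hF := hn_ge0 _.
set P := 4 / mf.
have Ppos : 0 < P by rewrite divr_gt0.
set W := 2 * (P * (hF + 1) + 1).
have Wpos : 0 < W by rewrite mulr_gt0 // ltr_wpDl // mulr_ge0 // ?addr_ge0 // ltW.
set B := M ^+ n.
have M0 : 0 < M by apply: lt_le_trans M1.
have Bpos : 0 < B by rewrite exprn_gt0.
set Y := eps * mf / B.
have Ypos : 0 < Y by rewrite divr_gt0 // mulr_gt0.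
set E := Y ^+ 2 / (4 * P * W).
have h4 : 0 < 4 * P * W.
  by apply: mulr_gt0 => //; apply: mulr_gt0 => //; lra.
have Epos : 0 < E by rewrite divr_gt0 // exprn_gt0.
exists (Num.min (mf / 2) (Num.min 1 E)); split.
  by rewrite !lt_min divr_gt0 // Epos ltr01.
move=> g hgs; have hg := hgs.1.
move=> hd0.
have hd : hn (fun k => f k - g k) < Num.min (mf / 2) (Num.min 1 E).
  by rewrite -hn_Bsym; exact: hd0.
clear hd0.
set d := hn (fun k => f k - g k) in hd.
move: hd; rewrite !lt_min => /andP[hd1 /andP[hd2 hd3]].
have d0 : 0 <= d := hn_ge0 _.
have hfg : H2 (fun k => f k - g k) := H2_B hf hg.
set p := Qn n g.
have hp : is_opa n g p := Qn_opa n hgs.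
have sp : (size p <= n.+1)%N by case: hp.
have Dr (r : {poly R[i]}) : (size r <= n.+1)%N -> hn (cnv r (fun k => f k - g k)) <= pn n.+1 r * d.
  by move=> sr; exact: hn_conv sr hfg.
have cf_le (r : {poly R[i]}) : (size r <= n.+1)%N -> hn (cnv r f) <= hn (cnv r g) + pn n.+1 r * d.
  move=> sr.
  rewrite (@hn_eq _ (cnv r f) (fun k => cnv r g k + cnv r (fun k => f k - g k) k)); last first.
    by move=> k; rewrite conv_subr addrC subrK.
  apply: le_trans (hn_D (H2_conv sr hg) (H2_conv sr hfg)) _.
  by rewrite lerD2l Dr.
have hg_le : hn g <= hF + d.
  rewrite (@hn_eq _ g (fun k => f k - (f k - g k))); last by move=> k; rewrite opprB addrC subrK.
  exact: hn_B.
have s0 : (size (0 : {poly R[i]})%R <= n.+1)%N by rewrite size_poly0.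
have cpg : hn (cnv p g) <= 2.
  apply: le_trans (hn_res_conv sp hg) _.
  have := opa_le hp s0; rewrite hn_res0; lra.
have cqf : hn (cnv q f) <= 2.
  apply: le_trans (hn_res_conv sq hf) _.
  have := opa_le hq s0; rewrite hn_res0; lra.
have pnp : pn n.+1 p <= P.
  have h1 := mfH _ sp; have h2 := cf_le _ sp; have h3 := pn_ge0 n.+1 p.
  exact: (ar1 mfpos h3 h1 h2 cpg hd1).
have pnq : pn n.+1 q <= P.
  have h1 := mfH _ sq; have h3 := pn_ge0 n.+1 q.
  exact: (ar2 mfpos h3 h1 cqf).
have Ndiff (r : {poly R[i]}) : (size r <= n.+1)%N -> pn n.+1 r <= P ->
    `|Nn (res_coef r f) - Nn (res_coef r g)| <= P * d * W.
  move=> sr pr.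
  have hrf := H2_res sr hf; have hrg := H2_res sr hg.
  have hAB : `|hn (res_coef r f) - hn (res_coef r g)| <= pn n.+1 r * d.
    apply: le_trans (hn_dist hrf hrg) _.
    rewrite (@hn_eq _ _ (cnv r (fun k => f k - g k))) ?Dr //.
    by move=> k; rewrite !res_convE conv_subr; ring.
  have hA : hn (res_coef r f) <= pn n.+1 r * hF + 1.
    rewrite res_convE; apply: le_trans (hn_B (H2_conv sr hf) (@H2_dl R)) _.
    by rewrite hn_dl lerD2r hn_conv.
  have hB : hn (res_coef r g) <= pn n.+1 r * (hF + d) + 1.
    rewrite res_convE; apply: le_trans (hn_B (H2_conv sr hg) (@H2_dl R)) _.
    rewrite hn_dl lerD2r; apply: le_trans (hn_conv sr hg) _.
    by rewrite ler_wpM2l // pn_ge0.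
  rewrite -(hn2 hrf) -(hn2 hrg).
  set A := hn (res_coef r f) in hAB hA *; set Bv := hn (res_coef r g) in hAB hB *.
  have A0 : 0 <= A := hn_ge0 _; have B0 : 0 <= Bv := hn_ge0 _.
  have -> : A ^+ 2 - Bv ^+ 2 = (A - Bv) * (A + Bv) by ring.
  rewrite normrM (ger0_norm (addr_ge0 A0 B0)).
  have pr0 := pn_ge0 n.+1 r.
  have hAB' : `|A - Bv| <= P * d by apply: le_trans hAB _; rewrite ler_wpM2r.
  have hsum : A + Bv <= W.
    have e1 : pn n.+1 r * hF <= P * hF by rewrite ler_wpM2r.
    have e2 : pn n.+1 r * (hF + d) <= P * (hF + 1).
      apply: le_trans (_ : P * (hF + d) <= _); first by rewrite ler_wpM2r // addr_ge0.
      by apply: ler_wpM2l; [exact: ltW | rewrite lerD2l; exact: ltW].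
    rewrite /W; lra.
  apply: le_trans (ler_wpM2r (addr_ge0 A0 B0) hAB') _.
  by rewrite ler_wpM2l // mulr_ge0 // ltW.
have e1 := pyth hf hq sp.
have e2 := pyth hg hp sq.
have N0 : 0 <= Nn (cnv (q - p) g) := Nn_ge0 (H2_conv (size_subp sq sp) hg).
have Ndp := Ndiff _ sp pnp; have Ndq := Ndiff _ sq pnq.
have hpq : Nn (cnv (p - q) f) <= 2 * (P * d * W).
  exact: (ar3 e1 e2 N0 Ndp Ndq).
have spq := size_subp sp sq.
have hX := mfH _ spq.
set X := mf * pn n.+1 (p - q) in hX.
have X0 : 0 <= X by apply: mulr_ge0; [exact: ltW | exact: pn_ge0].
have XY : X < Y.
  have hc : hn (cnv (p - q) f) ^+ 2 = Nn (cnv (p - q) f) := hn2 (H2_conv spq hf).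
  have hc0 : 0 <= hn (cnv (p - q) f) := hn_ge0 _.
  have hdE : P * d * W < P * E * W.
    by rewrite ltr_pM2r // ltr_pM2l.
  have hE : 2 * (P * E * W) = Y ^+ 2 / 2.
    by rewrite /E; field; rewrite (gt_eqF Wpos) (gt_eqF Ppos).
  have hY2 : 0 < Y ^+ 2 by rewrite exprn_gt0.
  rewrite ltNge; apply/negP => hYX.
  have : Y ^+ 2 <= X ^+ 2 by rewrite lerXn2r // ?nnegrE // ltW.
  have : X ^+ 2 <= hn (cnv (p - q) f) ^+ 2 by rewrite lerXn2r // ?nnegrE.
  move: hc hpq hdE hE hY2; clear.
  set a := X ^+ 2; set b := Y ^+ 2; set c := hn _ ^+ 2; set e := Nn _.
  set u := P * d * W; set v := P * E * W.
  move=> *; lra.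
have pnB : pn n.+1 (p - q) * B < eps.
  exact: (ar4 mfpos Bpos XY).
move=> z Kz.
have hz := hM z Kz.
rewrite normc_cm ltcR -hornerN -hornerD (horner_coef_wide _ spq).
apply: le_lt_trans pnB; apply: le_trans (cm_sum _ _ _) _.
rewrite /pn mulr_suml; apply: ler_sum => i _.
rewrite cmM cmX ler_wpM2l ?cm_ge0 //.
apply: le_trans (_ : M ^+ i <= _).
  by rewrite lerXn2r // ?nnegrE ?cm_ge0 // ltW.
by rewrite ler_weXn2l // -ltnS.
Qed.
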